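(* Let $\mathbb{K}\in\{\mathbb{R},\mathbb{C}\}$, let $X$ be a linear space over $\mathbb{K}$, let $\phi\colon X\times X\to\mathbb{K}$ be biadditive and let $f\colon X\to\mathbb{K}$ satisfy $$f(x+y)=f(x)f(y)-\phi(x,y)\quad\text{for all }x,y\in X.$$ Assume there exists $z_0\in X$ with $\phi(z_0,z_0)\neq 0$. Then there exists a constant $a\in\mathbb{K}\setminus\{0\}$ such that $$f(x)=a\,\phi(x,z_0)+1\quad\text{for all }x\in X,$$ and moreover $$a^2\phi(x,z_0)^2=\phi(x,x)\quad\text{for all }x\in X.$$
   Context: A map $\phi\colon X\times X\to\mathbb{K}$ is biadditive if $\phi(x+x',y)=\phi(x,y)+\phi(x',y)$ and $\phi(x,y+y')=\phi(x,y)+\phi(x,y')$ for all $x,x',y,y'\in X$ (no homogeneity is assumed). $f$ is an arbitrary function (no regularity assumed). *)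

(* Defs.v *)
From HB Require Import structures.
From mathcomp Require Import all_boot all_order all_algebra.
From mathcomp Require Import reals.
From mathcomp Require Import complex.
Set Implicit Arguments. Unset Strict Implicit. Unset Printing Implicit Defensive.
Import Order.TTheory GRing.Theory Num.Theory.
Local Open Scope ring_scope.

Definition biadditive (V : zmodType) (K : zmodType) (phi : V -> V -> K) :=
  (forall x x' y, phi (x + x') y = phi x y + phi x' y) /\
  (forall x y y', phi x (y + y') = phi x y + phi x y').

Definition thm_statement (K : fieldType) : Prop :=
  forall (X : lmodType K) (phi : X -> X -> K) (f : X -> K),
    biadditive phi ->
    (forall x y : X, f (x + y) = f x * f y - phi x y) ->
    forall z0 : X, phi z0 z0 != 0 ->
    exists2 a : K, a != 0 &
      (forall x : X, f x = a * phi x z0 + 1) /\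
      (forall x : X, a ^+ 2 * (phi x z0) ^+ 2 = phi x x).

(* Main.v *)
Require Import Defs.
From HB Require Import structures.
From mathcomp Require Import all_boot all_order all_algebra.
From mathcomp Require Import reals.
From mathcomp Require Import complex.
From mathcomp Require Import ring.
Local Open Scope ring_scope.
Import GRing.Theory.

Lemma gen (K : fieldType) : thm_statement K.
Proof.
move=> X phi f [Hl Hr] Hf z0 Hz.
have key : forall x y z, phi x y * (f z - 1) = phi y z * (f x - 1).
  move=> x y z.
  have := Hf (x + y) z; rewrite -addrA Hf Hf Hf Hl Hr => E.
  have E2 : (f x * f y - phi x y) * f z - (phi x z + phi y z)
          = f x * (f y * f z - phi y z) - (phi x y + phi x z) by rewrite -E.
  have : phi x y * (f z - 1) - phi y z * (f x - 1) = 0.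
    apply/eqP; rewrite -(subr_eq0 _ 0) subr0.
    apply/eqP.
    have -> : phi x y * (f z - 1) - phi y z * (f x - 1) =
      (f x * (f y * f z - phi y z) - (phi x y + phi x z)) -
      ((f x * f y - phi x y) * f z - (phi x z + phi y z)) by ring.
    by rewrite E2 subrr.
  by move/eqP; rewrite subr_eq0 => /eqP.
set a := (f z0 - 1) / phi z0 z0.
have Hfa : forall x, f x = a * phi x z0 + 1.
  move=> x; have := key x z0 z0 => E.
  have -> : a * phi x z0 = (phi x z0 * (f z0 - 1)) / phi z0 z0 by rewrite /a; ring.
  by rewrite E mulrC mulKf // subrK.
have Hphi : forall x y, phi x y = a ^+ 2 * phi x z0 * phi y z0.
  move=> x y; have := Hf x y; rewrite !Hfa Hl => E.
  have : phi x y = (a * phi x z0 + 1) * (a * phi y z0 + 1)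
                   - (a * (phi x z0 + phi y z0) + 1) by rewrite E; ring.
  move->; ring.
exists a; last first.
  split=> // x; rewrite (Hphi x x); ring.
apply/eqP=> a0; move: Hz; rewrite (Hphi z0 z0) a0; apply/negP; rewrite negbK.
by rewrite expr2 !mul0r.
Qed.

Theorem theorem1 (R : realType) :
  thm_statement R /\ thm_statement R[i].
Proof. split; exact: gen. Qed.
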